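(* Let $\mathcal{M}=(S,A,\delta)$ be a finite fuzzy transition system with rational membership degrees and let $\gamma\in(0,1)$ be rational. Then $d^\gamma_f$ is a rational vector (indexed by $S\times S$) whose bit size is bounded by a polynomial in $\|\mathcal{M}\|$ and $\|\gamma\|$.
   Context: A fuzzy set on a finite set $X$ is a map $\mu:X\to[0,1]$; $\mathcal{F}(X)$ is the set of fuzzy sets on $X$; $\mu(U)=\max_{x\in U}\mu(x)$; $\mathsf{Supp}(\mu)=\{x\mid \mu(x)>0\}$. A fuzzy transition system is $\mathcal{M}=(S,A,\delta)$ with $S,A$ finite and $\delta:S\times A\to\mathcal{P}(\mathcal{F}(S))$, each $\delta(s,a)$ finite. $\|\mathcal{M}\|=|S|+\sum_{s,a,\mu\in\delta(s,a)}\|\mathsf{Supp}(\mu)\|$, where for a finite set of rationals its size is the total number of bits to encode its elements in binary as fractions; $\|\gamma\|$ is the bit size of $\gamma$. $\mathcal{D}(S)$ is the set of pseudo-ultrametrics $d:S\times S\to[0,1]$, ordered pointwise. Lifting: $\hat d(\mu,\eta)=1$ if $\mu(S)\ne\eta(S)$, and otherwise $\hat d(\mu,\eta)$ is the minimum of $\max_{u,v}\min(d(u,v),x_{uv})$ over $x_{uv}\ge0$ with $\max_v x_{uv}=\mu(u)$ for all $u$ and $\max_u x_{uv}=\eta(v)$ for all $v$. For finite $Z\subseteq\mathcal{F}(S)$: $\hat d(\mu,Z)=\min_{\eta\in Z}\hat d(\mu,\eta)$ if $Z\ne\emptyset$, else $1$. Hausdorff distance: $H_{\hat d}(\emptyset,\emptyset)=0$,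 otherwise $H_{\hat d}(Y,Z)=\max(\max_{\mu\in Y}\hat d(\mu,Z),\max_{\eta\in Z}\hat d(\eta,Y))$. $\Delta(d)(s,t)=\gamma\cdot\max_{a\in A}H_{\hat d}(\delta(s,a),\delta(t,a))$ is monotone on $\mathcal{D}(S)$, and $d^\gamma_f$ is its least fixpoint. *)

(* Defs.v *)
From HB Require Import structures.
From mathcomp Require Import all_boot all_order all_algebra.
From mathcomp Require Import boolp classical_sets reals.
Set Implicit Arguments. Unset Strict Implicit. Unset Printing Implicit Defensive.
Import Order.TTheory GRing.Theory Num.Theory.
Local Open Scope ring_scope.

(* number of binary digits of n (1 for n = 0) *)
Definition bitlen (n : nat) : nat := (trunc_log 2 n).+1.
(* bits to write a rational as a signed fraction numq/denq in binary *)
Definition ratsize (q : rat) : nat :=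
  (1 + bitlen `|numq q| + bitlen `|denq q|)%N.

Section FTS.
Variables (S A : finType).

(* A fuzzy transition system with rational membership degrees:
   delta s a is the finite set (duplicate-free list) delta(s,a). *)
Definition fts := S -> A -> seq {ffun S -> rat}.

Definition fts_wf (delta : fts) : Prop :=
  (forall s a, uniq (delta s a)) /\
  (forall s a mu, mu \in delta s a -> forall x, 0 <= mu x <= 1).

Definition supp_size (mu : {ffun S -> rat}) : nat :=
  \sum_(x : S | (0 < mu x)%R) ratsize (mu x).

Definition fts_size (delta : fts) : nat :=
  (#|S| + \sum_(s : S) \sum_(a : A) \sum_(mu <- delta s a) supp_size mu)%N.

Definition vec_size (q : S -> S -> rat) : nat :=
  (\sum_(s : S) \sum_(t : S) ratsize (q s t))%N.

Variable R : realType.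

Definition deltaR (delta : fts) (s : S) (a : A) : seq (S -> R) :=
  map (fun mu : {ffun S -> rat} => fun x => ratr (mu x)) (delta s a).

Definition mass (mu : S -> R) : R := \big[Num.max/0]_(x : S) mu x.

Definition pum (d : S -> S -> R) : Prop :=
  (forall u v, 0 <= d u v <= 1) /\
  (forall u, d u u = 0) /\
  (forall u v, d u v = d v u) /\
  (forall u v w, d u w <= Num.max (d u v) (d v w)).

Definition coupling (mu eta : S -> R) (x : S -> S -> R) : Prop :=
  (forall u v, 0 <= x u v) /\
  (forall u, \big[Num.max/0]_(v : S) x u v = mu u) /\
  (forall v, \big[Num.max/0]_(u : S) x u v = eta v).

Definition lift (d : S -> S -> R) (mu eta : S -> R) : R :=
  if mass mu != mass eta then 1
  else inf [set r : R | exists x, coupling mu eta x /\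
             r = \big[Num.max/0]_(u : S) \big[Num.max/0]_(v : S)
                    Num.min (d u v) (x u v)].

Definition lift_set (d : S -> S -> R) (mu : S -> R) (Z : seq (S -> R)) : R :=
  match Z with
  | [::] => 1
  | eta0 :: Z' => \big[Num.min/lift d mu eta0]_(eta <- Z') lift d mu eta
  end.

(* Hausdorff distance H_{hat d}; maxima over nonnegative values start at 0 *)
Definition hausdorff (d : S -> S -> R) (Y Z : seq (S -> R)) : R :=
  match Y, Z with
  | [::], [::] => 0
  | _, _ => Num.max (\big[Num.max/0]_(mu <- Y) lift_set d mu Z)
                    (\big[Num.max/0]_(eta <- Z) lift_set d eta Y)
  end.

Definition Delta (gamma : R) (delta : fts) (d : S -> S -> R) : S -> S -> R :=
  fun s t => gamma * \big[Num.max/0]_(a : A)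
                       hausdorff d (deltaR delta s a) (deltaR delta t a).

Definition is_lfp (F : (S -> S -> R) -> (S -> S -> R)) (d : S -> S -> R) : Prop :=
  pum d /\ (forall s t, F d s t = d s t) /\
  (forall d', pum d' -> (forall s t, F d' s t = d' s t) ->
     forall s t, d s t <= d' s t).

End FTS.

(* Main.v *)
Require Import Defs.
From HB Require Import structures.
From mathcomp Require Import all_boot all_order all_algebra.
From mathcomp Require Import boolp classical_sets reals.
From mathcomp Require Import ring lra zify.
Import Order.TTheory GRing.Theory Num.Theory.
Local Open Scope ring_scope.

Section Gen.
Variable R : realType.

Lemma max_or (x y : R) : Num.max x y = x \/ Num.max x y = y.
Proof. by case: (leP x y) => h; auto. Qed.
Lemma min_or (x y : R) : Num.min x y = x \/ Num.min x y = y.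
Proof. by case: (leP x y) => h; auto. Qed.

Lemma le_bigmaxR (I : eqType) (s : seq I) (P : pred I) (F : I -> R) idx i :
  i \in s -> P i -> F i <= \big[Num.max/idx]_(j <- s | P j) F j.
Proof.
move=> + Pi; elim: s => // a s IH; rewrite inE big_cons => /orP [/eqP <- | Hi].
  by rewrite Pi le_max lexx.
by case: (P a); rewrite ?le_max IH ?orbT.
Qed.

Lemma bigmax_leR (I : Type) (s : seq I) (P : pred I) (F : I -> R) idx c :
  idx <= c -> (forall i, P i -> F i <= c) -> \big[Num.max/idx]_(j <- s | P j) F j <= c.
Proof.
move=> h0 h; apply: (big_ind (fun z => z <= c)) => //.
by move=> x y hx hy; rewrite ge_max hx hy.
Qed.

Lemma idx_le_bigmax (I : Type) (s : seq I) (P : pred I) (F : I -> R) idx :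
  idx <= \big[Num.max/idx]_(j <- s | P j) F j.
Proof.
elim: s => [|a s IH]; rewrite ?big_nil // big_cons; case: (P a) => //.
by rewrite le_max IH orbT.
Qed.

Lemma bigmax_attain (I : Type) (s : seq I) (P : pred I) (F : I -> R) idx :
  \big[Num.max/idx]_(j <- s | P j) F j = idx \/
  exists i, \big[Num.max/idx]_(j <- s | P j) F j = F i.
Proof.
apply: (big_ind (fun z => z = idx \/ exists i, z = F i)); first by left.
  by move=> x y hx hy; case: (max_or x y) => ->.
by move=> i _; right; exists i.
Qed.

Lemma big_in (I : Type) (s : seq I) (P : pred I) (F : I -> R) idx (W : seq R) (op : R -> R -> R) :
  (forall x y, op x y = x \/ op x y = y) ->
  idx \in W -> (forall i, P i -> F i \in W) -> \big[op/idx]_(j <- s | P j) F j \in W.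
Proof.
move=> hop h0 h; apply: (big_ind (fun z => z \in W)) => //.
by move=> x y hx hy; case: (hop x y) => ->.
Qed.

Lemma seq_min (s : seq R) x : x \in s -> exists2 m, m \in s & forall y, y \in s -> m <= y.
Proof.
elim: s x => // a s IH x _.
case: s IH => [|b s] IH.
  by exists a; rewrite ?mem_head // => y; rewrite inE => /eqP ->.
have [m Hm Hmin] := IH b (mem_head _ _).
case: (leP a m) => Ham.
  exists a; rewrite ?mem_head // => y; rewrite inE => /orP[/eqP->//|/Hmin].
  exact: le_trans.
exists m; first by rewrite inE Hm orbT.
move=> y; rewrite inE => /orP[/eqP->|/Hmin //]; exact: ltW.
Qed.

Lemma inf_attained (E : set R) (W : seq R) :
  (exists r, E r) -> (forall r, E r -> exists e, [/\ E e, e \in W & e <= r]) ->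
  inf E \in W.
Proof.
move=> [r0 Er0] h.
set L := [seq w <- W | `[< E w >]].
have [e0 [Ee0 We0 _]] := h r0 Er0.
have e0L : e0 \in L by rewrite mem_filter We0 andbT; apply/asboolP.
have [m mL mmin] := seq_min _ _ e0L.
move: mL; rewrite mem_filter => /andP[/asboolP Em mW].
have lb : lbound E m.
  move=> y Ey; have [e [Ee eW ey]] := h y Ey.
  apply: le_trans ey; apply: mmin; rewrite mem_filter eW andbT; exact/asboolP.
have -> : inf E = m.
  apply/eqP; rewrite eq_le; apply/andP; split.
    by apply: ge_inf => //; exists m.
  by apply: lb_le_inf => //; exists m.
done.
Qed.


End Gen.
Arguments max_or {R}. Arguments min_or {R}.
Arguments le_bigmaxR {R I s P F idx i}.

Section Lift.
Variables (R : realType) (S : finType).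
Implicit Types (d : S -> S -> R) (mu eta : S -> R).

Definition Wl d mu eta : seq R :=
  0 :: [seq d u v | u <- enum S, v <- enum S] ++ [seq mu u | u <- enum S] ++ [seq eta v | v <- enum S].

Definition rr d (x : S -> S -> R) : R :=
  \big[Num.max/0]_(u : S) \big[Num.max/0]_(v : S) Num.min (d u v) (x u v).

Lemma Wl_d d mu eta u v : d u v \in Wl d mu eta.
Proof. by rewrite /Wl inE mem_cat allpairs_f ?mem_enum ?orbT. Qed.
Lemma Wl_mu d mu eta u : mu u \in Wl d mu eta.
Proof. by rewrite /Wl inE !mem_cat map_f ?mem_enum ?orbT. Qed.
Lemma Wl_eta d mu eta u : eta u \in Wl d mu eta.
Proof. by rewrite /Wl inE !mem_cat map_f ?mem_enum ?orbT. Qed.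
Lemma Wl_0 d mu eta : 0 \in Wl d mu eta.
Proof. by rewrite /Wl mem_head. Qed.

Lemma key d mu eta x : coupling mu eta x ->
  exists x', [/\ coupling mu eta x', rr d x' \in Wl d mu eta & rr d x' <= rr d x].
Proof.
move=> [Hx0 [Hmu Heta]].
set W := Wl d mu eta.
set r := rr d x.
have r0 : 0 <= r by apply: idx_le_bigmax.
set w := \big[Num.max/0]_(z <- W | z <= r) z.
have wW : w \in W.
  rewrite /w big_seq_cond; apply: big_in; first exact: max_or.
    exact: Wl_0.
  by move=> z /andP[].
have wr : w <= r by apply: bigmax_leR.
have wfl : forall z, z \in W -> z <= r -> z <= w.
  by move=> z zW zr; apply: (le_bigmaxR (F := id)).
have w0 : 0 <= w by apply: idx_le_bigmax.
have mu0 : forall u, 0 <= mu u by move=> u; rewrite -Hmu; apply: idx_le_bigmax.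
have eta0 : forall v, 0 <= eta v by move=> v; rewrite -Heta; apply: idx_le_bigmax.
have xmu : forall u v, x u v <= mu u.
  by move=> u v; rewrite -Hmu; apply: (le_bigmaxR (F := x u)); rewrite ?mem_index_enum.
have xeta : forall u v, x u v <= eta v.
  by move=> u v; rewrite -Heta; apply: (le_bigmaxR (F := x^~ v)); rewrite ?mem_index_enum.
have kk : forall u v, w < d u v -> x u v <= r.
  move=> u v hd.
  have hm : Num.min (d u v) (x u v) <= r.
    apply: le_trans (le_bigmaxR (mem_index_enum u) isT).
    exact: (le_bigmaxR (F := fun v => Num.min (d u v) (x u v))) (mem_index_enum v) isT.
  have : r < d u v.
    rewrite ltNge; apply/negP => dr.
    by have := wfl _ (Wl_d _ _ _ u v) dr; rewrite leNgt hd.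
  move=> rd; move: hm; rewrite ge_min => /orP[h|//].
  by move: (lt_le_trans rd h); rewrite ltxx.
pose x' u v := if d u v <= w then Num.min (mu u) (eta v)
               else Num.min (Num.min (mu u) (eta v)) w.
have x'mu : forall u v, x' u v <= mu u.
  by move=> u v; rewrite /x'; case: ifP => _; rewrite !ge_min lexx.
have x'eta : forall u v, x' u v <= eta v.
  by move=> u v; rewrite /x'; case: ifP => _; rewrite !ge_min lexx ?orbT.
exists x'; split.
- split; [|split].
  + by move=> u v; rewrite /x'; case: ifP => _; rewrite !le_min ?mu0 ?eta0.
  + move=> u; apply/eqP; rewrite eq_le; apply/andP; split.
      by apply: bigmax_leR => // v _.
    case: (bigmax_attain _ _ (index_enum S) xpredT (x u) 0); rewrite Hmu.
      by move=> ->; apply: idx_le_bigmax.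
    move=> [v hv].
    have me : mu u <= eta v by rewrite hv xeta.
    suff <- : x' u v = mu u by apply: (le_bigmaxR (F := x' u)); rewrite ?mem_index_enum.
    rewrite /x'; case: ifP => hd; rewrite (min_l me) //.
    have hw : mu u <= w.
      apply: wfl; first exact: Wl_mu.
      by rewrite hv kk // ltNge hd.
    by rewrite min_l.
  + move=> v; apply/eqP; rewrite eq_le; apply/andP; split.
      by apply: bigmax_leR => // u _.
    case: (bigmax_attain _ _ (index_enum S) xpredT (x^~ v) 0); rewrite Heta.
      by move=> ->; apply: idx_le_bigmax.
    move=> [u hu].
    have me : eta v <= mu u by rewrite hu xmu.
    suff <- : x' u v = eta v by apply: (le_bigmaxR (F := x'^~ v)); rewrite ?mem_index_enum.
    rewrite /x'; case: ifP => hd; rewrite (min_r me) //.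
    have hw : eta v <= w.
      apply: wfl; first exact: Wl_eta.
      by rewrite hu kk // ltNge hd.
    by rewrite min_l.
- apply: big_in; [exact: max_or | exact: Wl_0 |] => u _.
  apply: big_in; [exact: max_or | exact: Wl_0 |] => v _.
  have hx' : x' u v \in W.
    rewrite /x'; case: ifP => _.
      by case: (min_or (mu u) (eta v)) => ->; rewrite ?Wl_mu ?Wl_eta.
    case: (min_or (Num.min (mu u) (eta v)) w) => -> //.
    by case: (min_or (mu u) (eta v)) => ->; rewrite ?Wl_mu ?Wl_eta.
  by case: (min_or (d u v) (x' u v)) => ->; rewrite ?Wl_d.
- apply: le_trans wr.
  apply: bigmax_leR => // u _; apply: bigmax_leR => // v _.
  rewrite /x'; case: ifP => hd; rewrite ge_min ?hd //.
  by rewrite ge_min lexx orbT orbT.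
Qed.

Lemma lift_in d mu eta : Defs.lift d mu eta = 1 \/ Defs.lift d mu eta \in Wl d mu eta.
Proof.
rewrite /Defs.lift; case: ifP => _; [by left | right].
set E := (X in inf X).
case: (pselect (exists r, E r)) => [ne | nne].
  apply: inf_attained => // r [x [hx ->]].
  have [x' [hx' hW hle]] := key d mu eta x hx.
  exists (rr d x'); split => //; by exists x'.
rewrite (_ : E = set0) ?inf0 ?Wl_0 //.
by rewrite predeqE => r; split => // Er; apply: nne; exists r.
Qed.

End Lift.

Lemma bitlen_mul (x y : nat) : (bitlen (x * y) <= bitlen x + bitlen y)%N.
Proof.
rewrite /bitlen.
have [->|x0] := posnP x; first by rewrite mul0n trunc_log0.
have [->|y0] := posnP y; first by rewrite muln0 trunc_log0; lia.
have hx := @trunc_log_ltn 2 x isT. have hy := @trunc_log_ltn 2 y isT.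
have hxy : (x * y < 2 ^ ((trunc_log 2 x).+1 + (trunc_log 2 y).+1))%N.
  rewrite expnD. apply: (@leq_ltn_trans (x * 2 ^ (trunc_log 2 y).+1)).
    by rewrite leq_mul2l ltnW ?orbT.
  by rewrite ltn_mul2r hx expn_gt0.
have : (trunc_log 2 (x * y) < (trunc_log 2 x).+1 + (trunc_log 2 y).+1)%N.
  rewrite ltnNge; apply/negP => H.
  have := @trunc_logP 2 (x*y) isT ltac:(by rewrite muln_gt0 x0 y0).
  move=> H2. have := leq_trans (leq_pexp2l (isT : (0 < 2)%N) H) H2. by rewrite leqNgt hxy.
lia.
Qed.

Lemma bitlen_mono (x y : nat) : (x <= y)%N -> (bitlen x <= bitlen y)%N.
Proof. by move=> h; rewrite /bitlen ltnS leq_trunc_log. Qed.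

Lemma ratsizeM (a b : rat) : (ratsize (a * b) <= ratsize a + ratsize b)%N.
Proof.
set q := a * b.
have Hid : numq q * denq a * denq b = numq a * numq b * denq q.
  apply: (@intr_inj rat). rewrite !intrM !numqE /q. ring.
have Hn : (`|numq q| * (`|denq a| * `|denq b|) = `|numq a| * `|numq b| * `|denq q|)%N.
  by rewrite -!abszM mulrA Hid.
have Dpos : (0 < `|denq a| * `|denq b|)%N by rewrite muln_gt0 !absz_gt0 !denq_neq0.
have Hd : (`|denq q| <= `|denq a| * `|denq b|)%N.
  apply: (dvdn_leq Dpos).
  have := coprime_num_den q. rewrite coprime_sym => Hc.
  rewrite -(Gauss_dvdr _ Hc) Hn. by apply: dvdn_mull.
have Hn2 : (`|numq q| <= `|numq a| * `|numq b|)%N.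
  rewrite -(leq_pmul2r Dpos) Hn. by rewrite leq_mul2l Hd orbT.
rewrite /ratsize.
have := bitlen_mul `|numq a| `|numq b|. have := bitlen_mul `|denq a| `|denq b|.
have := bitlen_mono _ _ Hd. have := bitlen_mono _ _ Hn2. lia.
Qed.

Lemma sum_ge_term (I : finType) (F : I -> nat) i : (F i <= \sum_j F j)%N.
Proof. by rewrite (bigD1 i) //= leq_addr. Qed.

Lemma ratsize0 : ratsize 0 = 3%N. Proof. by []. Qed.
Lemma ratsize1 : ratsize 1 = 3%N. Proof. by []. Qed.

Section Main.
Variables (R : realType) (S A : finType) (delta : fts S A).
Hypothesis wf : fts_wf delta.

Definition FF := (fts_size delta + 3)%N.
Definition good (z : R) := exists m : rat, z = ratr m /\ (ratsize m <= FF)%N.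
Definition Pd (d : S -> S -> R) (z : R) := (exists u v, z = d u v) \/ good z.

Lemma good0 : good 0. Proof. by exists 0; rewrite rmorph0 ratsize0 /FF leq_addl. Qed.
Lemma good1 : good 1. Proof. by exists 1; rewrite rmorph1 ratsize1 /FF leq_addl. Qed.

Definition okm (m : {ffun S -> rat}) := exists s a, m \in delta s a.

Lemma good_mem m x : okm m -> good (ratr (m x)).
Proof.
move=> [s [a hm]].
have [h0|h0] := ltP 0 (m x).
  exists (m x); split => //.
  apply: (@leq_trans (fts_size delta)); last by rewrite /FF leq_addr.
  apply: (@leq_trans (supp_size m)); first by rewrite /supp_size (bigD1 x) //= leq_addr.
  apply: (@leq_trans (\sum_(mu <- delta s a) supp_size mu)).
    by rewrite (big_rem m hm) /= leq_addr.
  apply: (@leq_trans (\sum_(a : A) \sum_(mu <- delta s a) supp_size mu)).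
    by rewrite (bigD1 a) //= leq_addr.
  apply: (@leq_trans (\sum_(s : S) \sum_(a : A) \sum_(mu <- delta s a) supp_size mu)).
    by rewrite (bigD1 s) //= leq_addr.
  by rewrite /fts_size leq_addl.
have [_ hwf] := wf.
have /andP[h1 _] := hwf _ _ _ hm x.
have -> : m x = 0 by apply/eqP; rewrite eq_le h0 h1.
by rewrite rmorph0; exact: good0.
Qed.

Lemma big_P (I : eqType) (s : seq I) (F : I -> R) (op : R -> R -> R) idx (K : R -> Prop) :
  (forall x y, op x y = x \/ op x y = y) -> K idx -> (forall i, i \in s -> K (F i)) ->
  K (\big[op/idx]_(i <- s) F i).
Proof.
move=> hop h0 h; rewrite big_seq; apply: big_ind => //.
by move=> x y hx hy; case: (hop x y) => ->.
Qed.

Definition fR (m : {ffun S -> rat}) : S -> R := fun x => ratr (m x).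

Lemma P_lift d m m' : okm m -> okm m' -> Pd d (Defs.lift d (fR m) (fR m')).
Proof.
move=> hm hm'.
case: (lift_in _ _ d (fR m) (fR m')) => [->|]; first by right; exact: good1.
rewrite /Wl inE => /orP[/eqP ->|]; first by right; exact: good0.
rewrite !mem_cat => /orP[/allpairsP [[u v] [_ _ ->]]|/orP[]/mapP[u _ ->]].
- by left; exists u, v.
- by right; apply: good_mem.
- by right; apply: good_mem.
Qed.

Lemma P_lift_set d m l : okm m -> (forall m', m' \in l -> okm m') ->
  Pd d (lift_set d (fR m) (map fR l)).
Proof.
move=> hm hl; case: l hl => [|m0 l] hl /=; first by right; exact: good1.
rewrite big_map; apply: big_P; first exact: min_or.
  by apply: P_lift => //; apply: hl; rewrite mem_head.
by move=> i hi; apply: P_lift => //; apply: hl; rewrite inE hi orbT.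
Qed.

Lemma P_haus d l1 l2 : (forall m', m' \in l1 -> okm m') -> (forall m', m' \in l2 -> okm m') ->
  Pd d (hausdorff d (map fR l1) (map fR l2)).
Proof.
move=> h1 h2.
have H : Pd d (Num.max (\big[Num.max/0]_(mu <- map fR l1) lift_set d mu (map fR l2))
                       (\big[Num.max/0]_(eta <- map fR l2) lift_set d eta (map fR l1))).
  case: (max_or (\big[Num.max/0]_(mu <- map fR l1) lift_set d mu (map fR l2))
                (\big[Num.max/0]_(eta <- map fR l2) lift_set d eta (map fR l1))) => ->;
  rewrite big_map; (apply: big_P; [exact: max_or| right; exact: good0|]) => i hi;
  apply: P_lift_set; auto.
by rewrite /hausdorff; case: l1 h1 H => [|? ?]; case: l2 h2 => [|? ?] //= _ _ _; right; exact: good0.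
Qed.

Lemma P_Delta g d s t : Delta (ratr g) delta d s t = ratr g *
   \big[Num.max/0]_(a : A) hausdorff d (map fR (delta s a)) (map fR (delta t a)) /\
   Pd d (\big[Num.max/0]_(a : A) hausdorff d (map fR (delta s a)) (map fR (delta t a))).
Proof.
split; first by [].
apply: big_ind; [right; exact: good0| |].
  by move=> x y hx hy; case: (max_or x y) => ->.
by move=> a _; apply: P_haus => m hm; [exists s, a | exists t, a].
Qed.

End Main.

Section Chain.
Variables (R : realType) (S : finType) (d : S -> S -> R) (g : rat) (F : nat).
Hypothesis hg : 0 < g < 1.
Hypothesis hF : (3 <= F)%N.
Hypothesis d0 : forall u v, 0 <= d u v.
Hypothesis hfix : forall s t, exists z,
  ((exists u v, z = d u v) \/ (exists m : rat, z = ratr m /\ (ratsize m <= F)%N)) /\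
  d s t = ratr g * z.

Definition rank (p : S * S) := #|[pred q : S * S | d p.1 p.2 < d q.1 q.2]|.

Lemma chain n p : (rank p < n)%N -> exists j m,
  [/\ (j <= rank p)%N, (ratsize m <= F)%N & d p.1 p.2 = ratr (g ^+ j.+1 * m)].
Proof.
have [g0 g1] : 0 < (ratr g : R) /\ (ratr g : R) < 1.
  case/andP: hg => h0 h1; split; first by rewrite ltr0q.
  by rewrite -(rmorph1 (ratr : rat -> R)) ltr_rat.
elim: n p => // n IH p hp.
have [z [Pz e]] := hfix p.1 p.2.
case: Pz => [[u [v ez]] | [m [ez hm]]]; last first.
  by exists 0%N, m; rewrite leq0n hm e ez expr1 rmorphM.
have [dp0|dpn0] := eqVneq (d p.1 p.2) 0.
  by exists 0%N, 0; rewrite leq0n ratsize0 hF mulr0 rmorph0 dp0.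
have dp : 0 < d p.1 p.2 by rewrite lt0r dpn0 d0.
have duv : d p.1 p.2 < d u v.
  have := d0 u v; rewrite e ez in dp *; move=> h. nra.
have hr : (rank (u, v) < rank p)%N.
  rewrite /rank; apply: proper_card; apply/fintype.properP; split.
    apply/fintype.subsetP => q; rewrite !inE /= => h; exact: lt_trans duv h.
  by exists (u, v); rewrite !inE /= ?duv ?ltxx.
have [j [m [hj hm he]]] := IH (u, v) (leq_trans hr hp).
exists j.+1, m; split => //; first exact: leq_ltn_trans hj hr.
by rewrite e ez; move: he => /= ->; rewrite -rmorphM [in RHS]exprS mulrA.
Qed.

End Chain.

Lemma ratsize_pow (g m : rat) k : (ratsize (g ^+ k * m) <= k * ratsize g + ratsize m)%N.
Proof.
elim: k => [|k IH]; first by rewrite expr0 mul1r.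
rewrite exprS -mulrA; apply: leq_trans (ratsizeM _ _) _.
rewrite mulSn -addnA leq_add2l //.
Qed.

Lemma arith (n fs rg : nat) : (n <= fs)%N ->
  (n * (n * ((n * n).+1 * rg + (fs + 3))) <= 6 * (fs + rg + 1) ^ 5)%N.
Proof.
move=> h.
set N := (fs + rg + 1)%N.
have hn : (n <= N)%N by rewrite /N; lia.
have hr : (rg <= N)%N by rewrite /N; lia.
have hf : (fs + 3 <= 4 * N)%N by rewrite /N; lia.
have h1 : (n * (n * ((n * n).+1 * rg + (fs + 3))) <= N * (N * ((N * N).+1 * N + 4 * N)))%N.
  apply: leq_mul => //; apply: leq_mul => //; apply: leq_add => //.
  apply: leq_mul => //; rewrite ltnS; exact: leq_mul.
apply: leq_trans h1 _.
have N1 : (1 <= N)%N by rewrite /N; lia.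
have : (N ^ 3 <= N ^ 5)%N by apply: leq_pexp2l.
rewrite !expnS expn0. nia.
Qed.

Theorem lemma7 :
  exists c k : nat,
  forall (R : realType) (S A : finType) (delta : fts S A) (gamma : rat),
    fts_wf delta -> 0 < gamma < 1 ->
    forall d : S -> S -> R,
      is_lfp (Delta (ratr gamma) delta) d ->
      exists q : S -> S -> rat,
        (forall s t, d s t = ratr (q s t)) /\
        (vec_size q <= c * (fts_size delta + ratsize gamma + 1) ^ k)%N.
Proof.
exists 6%N, 5%N => R S A delta g wf hg d [pumd [hfix _]].
have hfix' : forall s t, exists z,
  ((exists u v, z = d u v) \/ (exists m : rat, z = ratr m /\ (ratsize m <= (@FF S A delta))%N)) /\
  d s t = ratr g * z.
  move=> s t; have [e P] := @P_Delta R S A delta wf g d s t.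
  by eexists; split; [exact: P | rewrite -hfix e].
have d0 : forall u v, 0 <= d u v by move=> u v; case/andP: (pumd.1 u v).
have hF : (3 <= (@FF S A delta))%N by rewrite /FF leq_addl.
set B := ((#|S| * #|S|).+1 * ratsize g + (@FF S A delta))%N.
have : forall p : S * S, exists q : rat, d p.1 p.2 = ratr q /\ (ratsize q <= B)%N.
  move=> p.
  have [j [m [hj hm he]]] := @chain R S d g _ hg hF d0 hfix' _ p (ltnSn _).
  exists (g ^+ j.+1 * m); split => //.
  apply: leq_trans (ratsize_pow _ _ _) _.
  rewrite /B leq_add // leq_mul2r; apply/orP; right.
  rewrite ltnS; apply: leq_trans hj _; rewrite /rank -card_prod; exact: max_card.
case/choice => f hf.
exists (fun s t => f (s, t)); split.
  by move=> s t; have [-> _] := hf (s, t).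
apply: (@leq_trans (\sum_(s : S) \sum_(t : S) B)).
  rewrite /vec_size; apply: leq_sum => s _; apply: leq_sum => t _.
  by have [_ ->] := hf (s, t).
rewrite !sum_nat_const /B /FF.
apply: arith.
by rewrite /fts_size leq_addr.
Qed.
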